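(* Let $(\gamma,d)$ be a metric space homeomorphic to $[0,1]$, equipped with a total order $\le$ induced by a homeomorphism from $[0,1]$. Let $(x_i,z_i,y_i)_{i\in\mathbb{N}}$ be triples of points of $\gamma$ with $x_i\le z_i\le y_i$ and $x_i\ne y_i$ for each $i$. If $$\lim_{i\to\infty}\frac{d(x_i,y_i)}{\max\{d(x_i,z_i),d(z_i,y_i)\}}=0,$$ then $\lim_{i\to\infty}\max\{d(x_i,z_i),d(z_i,y_i)\}=0$. *)

(* Defs.v *)
From Stdlib Require Import Reals.
Open Scope R_scope.

Definition is_metric {T : Type} (d : T -> T -> R) : Prop :=
  (forall x y, 0 <= d x y) /\
  (forall x y, d x y = 0 <-> x = y) /\
  (forall x y, d x y = d y x) /\
  (forall x y z, d x z <= d x y + d y z).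

Definition in01 (s : R) : Prop := 0 <= s <= 1.

Definition homeo01 {T : Type} (d : T -> T -> R) (h : R -> T) : Prop :=
  (forall s t, in01 s -> in01 t -> h s = h t -> s = t) /\
  (forall p : T, exists s, in01 s /\ h s = p) /\
  (forall s, in01 s -> forall eps, 0 < eps -> exists delta, 0 < delta /\
     forall t, in01 t -> Rabs (t - s) < delta -> d (h s) (h t) < eps) /\
  (forall s, in01 s -> forall eps, 0 < eps -> exists delta, 0 < delta /\
     forall t, in01 t -> d (h s) (h t) < delta -> Rabs (t - s) < eps).

Definition ord_le {T : Type} (h : R -> T) (x y : T) : Prop :=
  exists s t, in01 s /\ in01 t /\ s <= t /\ h s = x /\ h t = y.

(* Main.v *)
Require Import Defs.
From Stdlib Require Import ZArith Reals Lra Lia Classical ClassicalEpsilon Rtopology.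
Open Scope R_scope.

Lemma cluster01 (s : nat -> R) (Hs : forall n, in01 (s n)) :
  exists l, in01 l /\ forall del, 0 < del -> forall N, exists p, (N <= p)%nat /\ Rabs (s p - l) < del.
Proof.
  destruct (Bolzano_Weierstrass s (fun c => 0 <= c <= 1) (compact_P3 0 1) Hs) as [l Hl].
  assert (K : forall del, 0 < del -> forall N, exists p, (N <= p)%nat /\ Rabs (s p - l) < del).
  { intros del Hdel N.
    destruct (Hl (disc l (mkposreal del Hdel)) N) as [p [Hp1 Hp2]].
    - exists (mkposreal del Hdel). intros y Hy. exact Hy.
    - exists p. split; [exact Hp1| exact Hp2]. }
  exists l. split; [|exact K].
  unfold in01. split.
  - destruct (Rle_dec 0 l) as [?|Hn]; [assumption|].
    destruct (K (- l) ltac:(lra) 0%nat) as [p [_ Hp]].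
    specialize (Hs p). unfold in01 in Hs.
    apply Rabs_def2 in Hp. lra.
  - destruct (Rle_dec l 1) as [?|Hn]; [assumption|].
    destruct (K (l - 1) ltac:(lra) 0%nat) as [p [_ Hp]].
    specialize (Hs p). unfold in01 in Hs.
    apply Rabs_def2 in Hp. lra.
Qed.

Lemma bound01 (T : Type) (d : T -> T -> R) (h : R -> T)
  (Hd : is_metric d) (Hh : homeo01 d h) :
  exists B, forall s t, in01 s -> in01 t -> d (h s) (h t) <= B.
Proof.
  destruct Hd as [Hpos [Hzero [Hsym Htri]]].
  destruct Hh as [Hinj [Hsurj [Hcont Hicont]]].
  assert (H0 : in01 0) by (unfold in01; lra).
  assert (HB : exists B, forall s, in01 s -> d (h 0) (h s) <= B).
  { apply NNPP. intro HN.
    assert (Hn : forall n : nat, exists s, in01 s /\ INR n < d (h 0) (h s)).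
    { intro n. apply NNPP. intro Hc. apply HN. exists (INR n).
      intros s Hs. apply Rnot_lt_le. intro Hlt. apply Hc. exists s. auto. }
    set (sq := fun n => proj1_sig (constructive_indefinite_description _ (Hn n))).
    assert (Hsq : forall n, in01 (sq n) /\ INR n < d (h 0) (h (sq n))).
    { intro n. unfold sq. destruct (constructive_indefinite_description _ (Hn n)). simpl. exact a. }
    destruct (cluster01 sq (fun n => proj1 (Hsq n))) as [l [Hl Hcl]].
    destruct (Hcont l Hl 1 ltac:(lra)) as [del [Hdel Hc]].
    destruct (archimed (d (h 0) (h l) + 1)) as [Ha _].
    assert (Hup : Z.le 0 (up (d (h 0) (h l) + 1))).
    { apply le_IZR. pose proof (Hpos (h 0) (h l)). lra. }
    destruct (Hcl del Hdel (Z.to_nat (up (d (h 0) (h l) + 1)))) as [p [Hp1 Hp2]].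
    apply le_INR in Hp1. rewrite INR_IZR_INZ, Z2Nat.id in Hp1 by exact Hup.
    specialize (Hc (sq p) (proj1 (Hsq p)) Hp2).
    pose proof (proj2 (Hsq p)). pose proof (Htri (h 0) (h l) (h (sq p))). lra. }
  destruct HB as [B HB]. exists (2 * B). intros s t Hs Ht.
  pose proof (Htri (h s) (h 0) (h t)). rewrite (Hsym (h s) (h 0)) in H. pose proof (HB s Hs). pose proof (HB t Ht). lra.
Qed.

Lemma unifL (T : Type) (d : T -> T -> R) (h : R -> T)
  (Hd : is_metric d) (Hh : homeo01 d h) (eps : R) (Heps : 0 < eps) :
  exists delta, 0 < delta /\ forall s u t, in01 s -> in01 u -> in01 t -> s <= u -> u <= t ->
    d (h s) (h t) < delta -> d (h s) (h u) < eps.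
Proof.
  destruct Hd as [Hpos [Hzero [Hsym Htri]]].
  destruct Hh as [Hinj [Hsurj [Hcont Hicont]]].
  apply NNPP. intro HN.
  assert (Hn : forall n : nat, exists p : R * R * R,
    let '(s, u, t) := p in in01 s /\ in01 u /\ in01 t /\ s <= u /\ u <= t /\
      d (h s) (h t) < / (INR n + 1) /\ eps <= d (h s) (h u)).
  { intro n. apply NNPP. intro Hc. apply HN. exists (/ (INR n + 1)). split.
    { apply Rinv_0_lt_compat. pose proof (pos_INR n). lra. }
    intros s u t Hs Hu Ht Hsu Hut Hst. apply Rnot_le_lt. intro Hle. apply Hc.
    exists (s, u, t). simpl. tauto. }
  set (sq := fun n => proj1_sig (constructive_indefinite_description _ (Hn n))).
  assert (Hsq : forall n, let '(s, u, t) := sq n in in01 s /\ in01 u /\ in01 t /\ s <= u /\ u <= t /\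
      d (h s) (h t) < / (INR n + 1) /\ eps <= d (h s) (h u)).
  { intro n. unfold sq. destruct (constructive_indefinite_description _ (Hn n)). simpl. exact y. }
  set (S := fun n => fst (fst (sq n))).
  assert (HS : forall n, in01 (S n)).
  { intro n. specialize (Hsq n). unfold S. destruct (sq n) as [[a b] c]. simpl. tauto. }
  destruct (cluster01 S HS) as [l [Hl Hcl]].
  destruct (Hcont l Hl (eps / 2) ltac:(lra)) as [d1 [Hd1 Hc1]].
  destruct (Hicont l Hl d1 Hd1) as [d2 [Hd2 Hc2]].
  destruct (Hcont l Hl (d2 / 2) ltac:(lra)) as [d3 [Hd3 Hc3]].
  destruct (archimed (2 / d2)) as [Ha _].
  assert (Hup : Z.le 0 (up (2 / d2))).
  { apply le_IZR. assert (0 < 2 / d2) by (apply Rdiv_lt_0_compat; lra). lra. }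
  destruct (Hcl (Rmin d1 d3) ltac:(apply Rmin_pos; lra) (Z.to_nat (up (2 / d2)))) as [p [Hp1 Hp2]].
  apply le_INR in Hp1. rewrite INR_IZR_INZ, Z2Nat.id in Hp1 by exact Hup.
  specialize (Hsq p). unfold S in Hp2. destruct (sq p) as [[s u] t]. simpl in Hp2.
  destruct Hsq as [Hs [Hu [Ht [Hsu [Hut [Hst Hsu2]]]]]].
  assert (Hp3 : / (INR p + 1) < d2 / 2).
  { assert (2 / d2 < INR p + 1) by lra.
    apply (Rmult_lt_reg_r (INR p + 1)). pose proof (pos_INR p); lra.
    rewrite Rinv_l by (pose proof (pos_INR p); lra).
    apply (Rmult_lt_reg_l (2 / d2)). apply Rdiv_lt_0_compat; lra.
    replace (2 / d2 * (d2 / 2 * (INR p + 1))) with (INR p + 1) by (field; lra). lra. }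
  assert (Hls : d (h l) (h s) < d2 / 2).
  { apply Hc3; auto. pose proof (Rmin_r d1 d3). lra. }
  assert (Hlt : Rabs (t - l) < d1).
  { apply Hc2; auto. pose proof (Htri (h l) (h s) (h t)). lra. }
  assert (Hsl : Rabs (s - l) < d1) by (pose proof (Rmin_l d1 d3); lra).
  assert (Hul : Rabs (u - l) < d1).
  { apply Rabs_def2 in Hlt. apply Rabs_def2 in Hsl. apply Rabs_def1; lra. }
  pose proof (Hc1 u Hu Hul). pose proof (Hc1 s Hs Hsl).
  pose proof (Htri (h s) (h l) (h u)). rewrite (Hsym (h s) (h l)) in H1. lra.
Qed.

Theorem lemma4p1 (T : Type) (d : T -> T -> R) (h : R -> T)
  (Hd : is_metric d) (Hh : homeo01 d h)
  (x z y : nat -> T)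
  (Hxz : forall i, ord_le h (x i) (z i))
  (Hzy : forall i, ord_le h (z i) (y i))
  (Hxy : forall i, x i <> y i)
  (Hlim : Un_cv (fun i => d (x i) (y i) / Rmax (d (x i) (z i)) (d (z i) (y i))) 0) :
  Un_cv (fun i => Rmax (d (x i) (z i)) (d (z i) (y i))) 0.
Proof.
  intros eps Heps.
  destruct (unifL T d h Hd Hh (eps / 2) ltac:(lra)) as [del [Hdel HL]].
  destruct (bound01 T d h Hd Hh) as [B HB].
  pose proof Hd as Hd'. destruct Hd' as [Hpos [Hzero [Hsym Htri]]].
  pose proof Hh as Hh'. destruct Hh' as [Hinj _].
  set (del' := Rmin del (eps / 2)).
  assert (Hdel' : 0 < del') by (apply Rmin_pos; lra).
  set (B' := Rmax B 0).
  destruct (Hlim (del' / (B' + 1))) as [N HN].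
  { apply Rdiv_lt_0_compat; [lra|]. pose proof (Rmax_r B 0). unfold B'. lra. }
  exists N. intros n Hn. specialize (HN n Hn). unfold R_dist in *. simpl in *.
  destruct (Hxz n) as [s [u [Hs [Hu [Hsu [Es Eu]]]]]].
  destruct (Hzy n) as [u' [t [Hu' [Ht [Hut [Eu' Et]]]]]].
  assert (u = u') by (apply Hinj; auto; congruence). subst u'.
  rewrite <- Es, <- Eu, <- Et in HN. pose proof (Hxy n) as Hxyn. rewrite <- Es, <- Et in Hxyn. set (M := Rmax (d (h s) (h u)) (d (h u) (h t))) in *.
  assert (HM0 : 0 <= M) by (unfold M; pose proof (Rmax_l (d (h s) (h u)) (d (h u) (h t))); pose proof (Hpos (h s) (h u)); lra).
  assert (HMpos : 0 < M).
  { destruct HM0 as [?|HM]; [assumption|]. exfalso. apply Hxyn.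
    assert (d (h s) (h u) = 0).
    { pose proof (Rmax_l (d (h s) (h u)) (d (h u) (h t))). pose proof (Hpos (h s) (h u)). fold M in H. lra. }
    assert (d (h u) (h t) = 0).
    { pose proof (Rmax_r (d (h s) (h u)) (d (h u) (h t))). pose proof (Hpos (h u) (h t)). fold M in H0. lra. }
    apply Hzero in H. apply Hzero in H0. congruence. }
  assert (HMB : M <= B').
  { unfold M, B'. apply Rmax_lub; eapply Rle_trans; [apply HB; auto| apply Rmax_l | apply HB; auto | apply Rmax_l]. }
  rewrite Rminus_0_r in HN.
  set (r := d (h s) (h t) / M) in *.
  assert (Ec : d (h s) (h t) = r * M) by (unfold r; field; lra).
  assert (Hc : d (h s) (h t) < del').
  { rewrite Ec. apply Rabs_def2 in HN. destruct HN as [HN1 HN2].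
    assert (0 <= B') by (unfold B'; apply Rmax_r).
    assert (r * M <= del' / (B' + 1) * B').
    { apply Rle_trans with (del' / (B' + 1) * M). apply Rmult_le_compat_r; lra.
      apply Rmult_le_compat_l; [|lra]. apply Rlt_le, Rdiv_lt_0_compat; lra. }
    assert (del' / (B' + 1) * B' < del').
    { apply (Rmult_lt_reg_r (B' + 1)). lra.
      replace (del' / (B' + 1) * B' * (B' + 1)) with (del' * B') by (field; lra). nra. }
    lra. }
  assert (Hd1 : del' <= del) by apply Rmin_l.
  assert (Hd2 : del' <= eps / 2) by apply Rmin_r.
  pose proof (HL s u t Hs Hu Ht Hsu Hut ltac:(lra)).
  pose proof (Htri (h u) (h s) (h t)). rewrite (Hsym (h u) (h s)) in H0.
rewrite <- Es, <- Eu, <- Et, Rminus_0_r. fold M.   rewrite Rabs_right by lra. unfold M. apply Rmax_lub_lt; lra.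
Qed.
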